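(* Let $a,n,b,p,k$ be positive integers with $a>b$. If there exist a partition of $\{1,\dots,p\}$ into $k$ sum-free subsets and a $b$-WS-template $(A_1,\dots,A_{n+1})$ with width $a$ and $n+1$ colors, then there exists a partition of $\{1,\dots,pa+b\}$ into $k+n$ weakly sum-free subsets.
   Context: A set $A \subseteq \mathbb{N}$ is sum-free if for all $(a,b)\in A^2$ (allowing $a=b$), $a+b \notin A$; it is weakly sum-free if for all $(a,b)\in A^2$ with $a\neq b$, $a+b\notin A$. For positive integers $a>b$, let $\pi(x) = (x \bmod a) + a\cdot \mathbb{1}_{\{0,\dots,b\}}(x \bmod a)$. For positive integers $a,m,b$ with $a>b$, a partition $(A_1,\dots,A_m)$ of $\{1,\dots,a+b\}$ is a $b$-WS-template with width $a$ and $m$ colors if: (i) every $A_i$ is weakly sum-free; (ii) every $A_i\setminus\{1,\dots,b\}$ is sum-free; (iii) for all $(x,y)\in A_m^2$, $x+y>b+2a$ implies $x+y-2a\notin A_m$; (iv) for all $i\in\{1,\dots,m-1\}$ and $(x,y)\in A_i^2$, $x+y>a+b$ implies $\pi(x+y)\notin A_i$. *)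

(* Defs.v *)
From mathcomp Require Import all_boot.
Set Implicit Arguments. Unset Strict Implicit. Unset Printing Implicit Defensive.

Definition sum_free (A : pred nat) : Prop :=
  forall x y, A x -> A y -> ~~ A (x + y).

Definition weakly_sum_free (A : pred nat) : Prop :=
  forall x y, A x -> A y -> x != y -> ~~ A (x + y).

(* A partition of {1,...,N} into m parts A_0, ..., A_(m-1) is given by a
   colouring c : nat -> 'I_m ; part i is {x in [1,N] | c x = i}. *)
Definition part (N m : nat) (c : nat -> 'I_m) (i : 'I_m) : pred nat :=
  fun x => (1 <= x <= N) && (c x == i).

Definition sf_partition (N m : nat) (c : nat -> 'I_m) : Prop :=
  forall i : 'I_m, sum_free (part N c i).

Definition wsf_partition (N m : nat) (c : nat -> 'I_m) : Prop :=
  forall i : 'I_m, weakly_sum_free (part N c i).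

Definition piab (a b x : nat) : nat :=
  x %% a + (if x %% a <= b then a else 0).

(* b-WS-template with width a and m colours (m >= 1); colours are
   0, ..., m-1, colour m-1 playing the role of A_m. *)
Definition ws_template (a b m : nat) (c : nat -> 'I_m) : Prop :=
  let A := part (a + b) c in
  (forall i, weakly_sum_free (A i)) /\
  (forall i, sum_free (fun x => A i x && (b < x))) /\
  (forall i : 'I_m, i.+1 = m -> forall x y, A i x -> A i y ->
      b + 2 * a < x + y -> ~~ A i (x + y - 2 * a)) /\
  (forall i : 'I_m, i.+1 < m -> forall x y, A i x -> A i y ->
      a + b < x + y -> ~~ A i (piab a b (x + y))).

(* Main.v *)
Require Import Defs.
From mathcomp Require Import all_boot zify.

Lemma uniq_dec a Q Q' r r' : Q*a + r = Q'*a + r' -> r < r' + a -> r' < r + a -> Q = Q'.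
Proof.
move=> E h1 h2; case: (ltngtP Q Q') => // H.
- have : Q.+1 * a <= Q' * a by rewrite leq_mul2r H orbT.
  rewrite mulSn; lia.
- have : Q'.+1 * a <= Q * a by rewrite leq_mul2r H orbT.
  rewrite mulSn; lia.
Qed.

Definition RR a b x := if x <= b then x else if x %% a <= b then x %% a + a else x %% a.
Definition QQ a b x := if x <= b then 0 else if x %% a <= b then (x %/ a).-1 else x %/ a.

Lemma dec a b p x : 0 < a -> 0 < p -> b < a -> 1 <= x <= p * a + b ->
  [/\ x = QQ a b x * a + RR a b x, 1 <= RR a b x <= a + b,
      (x <= b -> QQ a b x = 0 /\ RR a b x = x), (b < x -> b < RR a b x) & QQ a b x < p].
Proof.
move=> a0 p0 ba /andP[x1 xp]; rewrite /QQ /RR.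
case: (leqP x b) => xb.
  split => //; lia.
have E := divn_eq x a; have ma := ltn_pmod x a0.
set D := x %/ a in E *; set m := x %% a in E ma *.
suff H : x = (if m <= b then D.-1 else D) * a + (if m <= b then m + a else m) /\
         b < (if m <= b then m + a else m) <= a + b.
  case: H => H1 H2; split => //; try lia.
  rewrite -(ltn_pmul2r a0); lia.
case: (leqP m b) => mb; last lia.
case: D E => [|D] E; first lia.
rewrite /= mulSn in E; lia.
Qed.

Lemma piab_char a b Q r : 0 < a -> b < a -> b < r <= a + b -> piab a b (Q * a + r) = r.
Proof.
move=> a0 ba /andP[br ra]; rewrite /piab modnMDl.
case: (ltnP r a) => h.
  by rewrite modn_small // leqNgt br /= addn0.
have -> : r = 1 * a + (r - a) by lia.
rewrite modnMDl modn_small; last lia.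
rewrite ifT; lia.
Qed.

Lemma tri a b x y z qx qy qz rx ry rz : 0 < a -> b < a ->
  x = qx*a+rx -> y = qy*a+ry -> z = x + y -> z = qz*a+rz ->
  1 <= rx <= a+b -> 1 <= ry <= a+b -> 1 <= rz <= a+b ->
  (x <= b -> qx = 0 /\ rx = x) -> (b < x -> b < rx) ->
  (y <= b -> qy = 0 /\ ry = y) -> (b < y -> b < ry) ->
  (z <= b -> qz = 0 /\ rz = z) -> (b < z -> b < rz) ->
  (qz = qx+qy /\ rz = rx+ry) \/ (qz = (qx+qy).+1 /\ rx+ry = rz+a /\ b<rz) \/
  (qz = (qx+qy).+2 /\ rx+ry = rz+2*a /\ b < rz).
Proof.
move=> a0 ba Ex Ey Ez Ez' hrx hry hrz sx bx sy bY sz bz.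
have M : qx*a + qy*a = (qx+qy)*a by rewrite mulnDl.
have M1 : (qx+qy).+1*a = (qx+qy)*a + a by rewrite mulSn addnC.
have M2 : (qx+qy).+2*a = (qx+qy)*a + a + a by rewrite !mulSn; lia.
case: (leqP z b) => zb.
  have [hx1 hx2] : qx = 0 /\ rx = x by apply: sx; lia.
  have [hy1 hy2] : qy = 0 /\ ry = y by apply: sy; lia.
  have [hz1 hz2] := sz zb.
  left; lia.
have rzb := bz zb.
have rxy : b < rx + ry.
  case: (leqP x b) => xb; last by have := bx xb; lia.
  case: (leqP y b) => yb; last by have := bY yb; lia.
  have := sx xb; have := sy yb; lia.
case: (ltnP (rx+ry) (rz+a)) => h1.
  have E : qz*a + rz = (qx+qy)*a + (rx+ry) by lia.
  have := @uniq_dec _ _ _ _ _ E; lia.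
case: (ltnP (rx+ry) (rz+2*a)) => h2.
  have E : qz*a + rz = (qx+qy).+1*a + (rx+ry-a) by lia.
  have := @uniq_dec _ _ _ _ _ E; lia.
have E : qz*a + rz = (qx+qy).+2*a + (rx+ry-2*a) by lia.
have := @uniq_dec _ _ _ _ _ E; lia.
Qed.

Theorem theorem3p17 (a n b p k : nat) :
  0 < a -> 0 < n -> 0 < b -> 0 < p -> 0 < k -> b < a ->
  (exists c : nat -> 'I_k, sf_partition p c) ->
  (exists t : nat -> 'I_n.+1, ws_template a b t) ->
  exists d : nat -> 'I_(k + n), wsf_partition (p * a + b) d.
Proof.
move=> a0 n0 b0 p0 k0 ba [c Hc] [t [T1 [T2 [T3 T4]]]].
pose col x := if t (RR a b x) < n then k + t (RR a b x) else c (QQ a b x).+1.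
have colP x : col x < k + n.
  rewrite /col; case: ifP => h; first by rewrite ltn_add2l.
  by apply: leq_trans (ltn_ord _) (leq_addr _ _).
have colE x y : col x = col y ->
   t (RR a b x) = t (RR a b y) /\ (n <= t (RR a b x) -> c (QQ a b x).+1 = c (QQ a b y).+1).
  rewrite /col.
  have hx := ltn_ord (t (RR a b x)); have hy := ltn_ord (t (RR a b y)).
  have cx := ltn_ord (c (QQ a b x).+1); have cy := ltn_ord (c (QQ a b y).+1).
  case: ifP => h1; case: ifP => h2 E.
  - split => [|]; first by apply: val_inj => /=; lia.
    lia.
  - lia.
  - lia.
  - split; first by apply: val_inj => /=; lia.
    by move=> _; apply: val_inj.
exists (fun x => Ordinal (colP x)).
move=> i x y; rewrite /part => /andP[hx ex] /andP[hy ey] xy.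
apply/negP => /andP[hz ez].
have Exy : col x = col y by have := congr1 val (eqP ex); have := congr1 val (eqP ey); rewrite /= => -> ->.
have Exz : col x = col (x+y) by have := congr1 val (eqP ex); have := congr1 val (eqP ez); rewrite /= => -> ->.
have [tyx cyx] := colE _ _ Exy.
have [tzx czx] := colE _ _ Exz.
have [Dx1 Dx2 Dx3 Dx4 Dx5] := dec _ _ _ _ a0 p0 ba hx.
have [Dy1 Dy2 Dy3 Dy4 Dy5] := dec _ _ _ _ a0 p0 ba hy.
have [Dz1 Dz2 Dz3 Dz4 Dz5] := dec _ _ _ _ a0 p0 ba hz.
set j := t (RR a b x).
have Ax : part (a + b) t j (RR a b x) by rewrite /part Dx2 eqxx.
have Ay : part (a + b) t j (RR a b y) by rewrite /part Dy2 -tyx eqxx.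
have Az : part (a + b) t j (RR a b (x+y)) by rewrite /part Dz2 -tzx eqxx.
have := @tri a b x y (x+y) _ _ _ _ _ _ a0 ba Dx1 Dy1 erefl Dz1 Dx2 Dy2 Dz2 Dx3 Dx4 Dy3 Dy4 Dz3 Dz4.
case=> [[Eq Er]|[[Eq [Er Eb]]|[Eq [Er Eb]]]].
- case: (eqVneq (RR a b x) (RR a b y)) => hr.
  + have bxr : b < RR a b x.
      case: (leqP (RR a b x) b) => // hb.
      have xb : x <= b by case: (leqP x b) => // xb; have := Dx4 xb; lia.
      have yb : y <= b by case: (leqP y b) => // yb; have := Dy4 yb; lia.
      have := Dx3 xb; have := Dy3 yb; move: xy => /eqP; lia.
    have := T2 j (RR a b x) (RR a b y) (introT andP (conj Ax bxr)).
    have byr : b < RR a b y by rewrite -hr.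
    move=> /(_ (introT andP (conj Ay byr))).
    by rewrite -Er Az /= ; lia.
  + by have := T1 j _ _ Ax Ay hr; rewrite -Er Az.
- case: (ltnP j n) => hj.
  + have := T4 j hj _ _ Ax Ay; rewrite Er.
    have -> : RR a b (x+y) + a = 1 * a + RR a b (x+y) by lia.
    rewrite piab_char //; last lia.
    by rewrite Az; lia.
  + have Cy := cyx hj; have Cz := czx hj.
    have P1 : part p c (c (QQ a b x).+1) (QQ a b x).+1 by rewrite /part eqxx andbT; lia.
    have P2 : part p c (c (QQ a b x).+1) (QQ a b y).+1 by rewrite /part -Cy eqxx andbT; lia.
    have := Hc _ _ _ P1 P2.
    have -> : (QQ a b x).+1 + (QQ a b y).+1 = (QQ a b (x+y)).+1 by lia.
    rewrite /part -Cz eqxx andbT.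
    have : QQ a b (x+y) < p := Dz5. lia.
- case: (ltnP j n) => hj.
  + have := T4 j hj _ _ Ax Ay; rewrite Er.
    have -> : RR a b (x+y) + 2 * a = 2 * a + RR a b (x+y) by lia.
    rewrite piab_char //; last lia.
    by rewrite Az; lia.
  + have hj' : j.+1 = n.+1 by have := ltn_ord j; lia.
    have := T3 j hj' _ _ Ax Ay; rewrite Er.
    have -> : RR a b (x+y) + 2 * a - 2 * a = RR a b (x+y) by lia.
    by rewrite Az; lia.
Qed.
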